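(* Let $f\colon[a,b]\to\mathbb{R}$ be Laplace integrable on $[a,b]$ and let $F(x)=\int_a^xf$ for $x\in[a,b]$. Then $F$ is continuous on $[a,b]$.
   Context: Laplace derivates: for $F$ Perron integrable near $x$ and $\delta>0$, $\underline{LD}_1^+F(x)=\liminf_{s\to\infty}s^2\int_0^\delta e^{-st}[F(x+t)-F(x)]dt$, $\overline{LD}_1^+F(x)$ the $\limsup$, $\underline{LD}_1^-F(x)=\liminf_{s\to\infty}(-s^2)\int_0^\delta e^{-st}[F(x-t)-F(x)]dt$, $\overline{LD}_1^-F(x)$ the $\limsup$ (independent of $\delta$); $\underline{LD}_1F=\min(\underline{LD}_1^+F,\underline{LD}_1^-F)$, $\overline{LD}_1F=\max(\overline{LD}_1^+F,\overline{LD}_1^-F)$ (one-sided at endpoints). A major function of $f$ is a continuous $U$ on $[a,b]$ with $\underline{LD}_1U\geqslant f$ and $\underline{LD}_1U>-\infty$ everywhere on $[a,b]$; a minor function is a continuous $V$ with $\overline{LD}_1V\leqslant f$ and $\overline{LD}_1V<\infty$ everywhere. $f$ is Laplace integrable on $[a,b]$ if $\sup\{V(b)-V(a)\}$ over minor functions equals $\inf\{U(b)-U(a)\}$ over major functions and is finite; the common value is $\int_a^bf$ (and $\int_a^x f$ is the integral of $f|_{[a,x]}$, with $\int_a^a f=0$). *)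

(* Defs.v *)
From Stdlib Require Import Reals.
From Coquelicot Require Import Coquelicot.
Open Scope R_scope.

Definition liminf_pinfty (g : R -> R) : Rbar :=
  Rbar_lub (fun y => exists M : R,
    y = Rbar_glb (fun z => exists s : R, M < s /\ z = Finite (g s))).
Definition limsup_pinfty (g : R -> R) : Rbar :=
  Rbar_glb (fun y => exists M : R,
    y = Rbar_lub (fun z => exists s : R, M < s /\ z = Finite (g s))).

(* s^2 \int_0^delta e^{-st} [F(x+t) - F(x)] dt  (F continuous: Riemann = Perron) *)
Definition lap_plus (F : R -> R) (x delta s : R) : R :=
  s ^ 2 * RInt (fun t => exp (- (s * t)) * (F (x + t) - F x)) 0 delta.
Definition lap_minus (F : R -> R) (x delta s : R) : R :=
  - s ^ 2 * RInt (fun t => exp (- (s * t)) * (F (x - t) - F x)) 0 delta.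

Definition LDlow_plus  F (b x : R) := liminf_pinfty (lap_plus F x (b - x)).
Definition LDup_plus   F (b x : R) := limsup_pinfty (lap_plus F x (b - x)).
Definition LDlow_minus F (a x : R) := liminf_pinfty (lap_minus F x (x - a)).
Definition LDup_minus  F (a x : R) := limsup_pinfty (lap_minus F x (x - a)).

(* two-sided derivates relative to [a,b], one-sided at the endpoints;
   max written as -min(-.,-.) *)
Definition LDlow (F : R -> R) (a b x : R) : Rbar :=
  if Req_EM_T x a then LDlow_plus F b x
  else if Req_EM_T x b then LDlow_minus F a x
  else Rbar_min (LDlow_plus F b x) (LDlow_minus F a x).
Definition LDup (F : R -> R) (a b x : R) : Rbar :=
  if Req_EM_T x a then LDup_plus F b x
  else if Req_EM_T x b then LDup_minus F a x
  else Rbar_opp (Rbar_min (Rbar_opp (LDup_plus F b x)) (Rbar_opp (LDup_minus F a x))).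

Definition continuous_on_cc (F : R -> R) (a b : R) : Prop :=
  forall x, a <= x <= b ->
    filterlim F (within (fun y => a <= y <= b) (locally x)) (locally (F x)).

Definition major_fun (f U : R -> R) (a b : R) : Prop :=
  continuous_on_cc U a b /\
  forall x, a <= x <= b ->
    Rbar_le (Finite (f x)) (LDlow U a b x) /\ LDlow U a b x <> m_infty.

Definition minor_fun (f V : R -> R) (a b : R) : Prop :=
  continuous_on_cc V a b /\
  forall x, a <= x <= b ->
    Rbar_le (LDup V a b x) (Finite (f x)) /\ LDup V a b x <> p_infty.

Definition minor_sup (f : R -> R) (a b : R) : Rbar :=
  Rbar_lub (fun y => exists V, minor_fun f V a b /\ y = Finite (V b - V a)).
Definition major_inf (f : R -> R) (a b : R) : Rbar :=
  Rbar_glb (fun y => exists U, major_fun f U a b /\ y = Finite (U b - U a)).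

Definition Laplace_integrable (f : R -> R) (a b : R) : Prop :=
  a < b /\ exists I : R, minor_sup f a b = Finite I /\ major_inf f a b = Finite I.

(* \int_a^b f : the common value when f is Laplace integrable on [a,b];
   \int_a^a f = 0 *)
Definition Laplace_int (f : R -> R) (a b : R) : R :=
  if Rle_dec b a then 0 else real (minor_sup f a b).

(* Main.v *)
Require Import Defs.
From Stdlib Require Import Reals Lra Classical.
From Coquelicot Require Import Coquelicot.
Open Scope R_scope.

Lemma lub_ok E : Rbar_is_lub E (Rbar_lub E).
Proof. unfold Rbar_lub. destruct (Rbar_ex_lub E); auto. Qed.
Lemma glb_ok E : Rbar_is_glb E (Rbar_glb E).
Proof. unfold Rbar_glb. destruct (Rbar_ex_glb E); auto. Qed.

Lemma limsup_le_iff g r :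
  Rbar_le (limsup_pinfty g) (Finite r) <->
  (forall eps, 0 < eps -> exists M, forall s, M < s -> g s <= r + eps).
Proof.
  unfold limsup_pinfty. split.
  - intros H eps Heps.
    destruct (classic (exists M, forall s, M < s -> g s <= r + eps)) as [Hc|Hc]; auto.
    exfalso.
    assert (Hlb : Rbar_le (Finite (r+eps)) (Rbar_glb (fun y => exists M : R,
      y = Rbar_lub (fun z => exists s : R, M < s /\ z = Finite (g s))))).
    { apply (proj2 (glb_ok _)). intros y [M ->].
      assert (exists s, M < s /\ r + eps < g s) as [s [Hs1 Hs2]].
      { apply NNPP; intro Hn. apply Hc. exists M. intros s Hs.
        apply Rnot_lt_le. intro Hl. apply Hn. exists s. auto. }
      apply Rbar_le_trans with (Finite (g s)).
      simpl; lra.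
      apply (proj1 (lub_ok _)). exists s; auto. }
    pose proof (Rbar_le_trans _ _ _ Hlb H). simpl in H0. lra.
  - intros H.
    set (G := Rbar_glb _).
    assert (HG : forall eps, 0 < eps -> Rbar_le G (Finite (r + eps))).
    { intros eps Heps. destruct (H eps Heps) as [M HM].
      apply Rbar_le_trans with (Rbar_lub (fun z => exists s : R, M < s /\ z = Finite (g s))).
      apply (proj1 (glb_ok _)). exists M; auto.
      apply (proj2 (lub_ok _)). intros z [s [Hs ->]]. simpl. apply HM; auto. }
    destruct G as [x| |] eqn:EG.
    + simpl. apply Rnot_lt_le. intro Hl.
      specialize (HG ((x - r)/2) ltac:(lra)). simpl in HG. lra.
    + specialize (HG 1 Rlt_0_1). simpl in HG. contradiction.
    + simpl. auto.
Qed.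

Lemma max_le A B r :
  Rbar_le (Rbar_opp (Rbar_min (Rbar_opp A) (Rbar_opp B))) (Finite r) <->
  Rbar_le A (Finite r) /\ Rbar_le B (Finite r).
Proof.
  destruct A as [a| |]; destruct B as [b| |]; simpl; unfold Rmin;
  try (destruct Rle_dec); simpl; split; intros; try tauto; try lra.
Qed.

Lemma hcont (k : R -> R) s : (forall z, continuous k z) ->
  forall z, continuous (fun t => exp (-(s*t)) * k t) z.
Proof.
  intros Hk z.
  apply (continuous_mult (fun t => exp (-(s*t))) k); auto.
  apply continuous_exp_comp.
  apply (continuous_opp (fun t => s * t)).
  apply (continuous_mult (fun _ => s) (fun t => t)).
  apply continuous_const. apply continuous_id.
Qed.

Lemma hint (k : R -> R) s a b : (forall z, continuous k z) ->
  ex_RInt (fun t => exp (-(s*t)) * k t) a b.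
Proof. intros Hk. apply (@ex_RInt_continuous R_CompleteNormedModule). intros; apply hcont; auto. Qed.

Lemma absint (k : R -> R) a b : (forall z, continuous k z) ->
  ex_RInt (fun t => Rabs (k t)) a b.
Proof. intros Hk. apply (@ex_RInt_continuous R_CompleteNormedModule). intros; apply continuous_Rabs_comp; auto. Qed.

Lemma tail (k : R -> R) s η δ : (forall z, continuous k z) -> 0 < s -> η <= δ ->
  Rabs (RInt (fun t => exp (-(s*t)) * k t) η δ) <=
  exp (-(s*η)) * RInt (fun t => Rabs (k t)) η δ.
Proof.
  intros Hk Hs Hd.
  eapply Rle_trans. apply abs_RInt_le; auto. apply hint; auto.
  replace (exp (-(s*η)) * RInt (fun t => Rabs (k t)) η δ)
    with (RInt (fun t => exp (-(s*η)) * Rabs (k t)) η δ).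
  2:{ apply (RInt_scal (fun t => Rabs (k t))). apply absint; auto. }
  apply RInt_le; auto.
  apply (@ex_RInt_continuous R_CompleteNormedModule). intros; apply continuous_Rabs_comp, hcont; auto.
  apply (@ex_RInt_continuous R_CompleteNormedModule). intros.
  apply (continuous_mult (fun _ => exp (-(s*η))) (fun t => Rabs (k t))).
  apply continuous_const. apply continuous_Rabs_comp; auto.
  intros x Hx. rewrite Rabs_mult, Rabs_pos_eq by (left; apply exp_pos).
  apply Rmult_le_compat_r. apply Rabs_pos.
  destruct (Req_dec x η). subst; lra.
  left. apply exp_increasing. nra.
Qed.

Lemma expbound s η : 0 < s -> 0 < η -> s^3 * η^3 * exp (-(s*η)) <= 27.
Proof.
  intros Hs He.
  set (u := s*η/3).
  assert (Hu : 0 < u) by (unfold u; nra).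
  assert (E1 : exp (s*η) = exp u * exp u * exp u).
  { rewrite <- !exp_plus. f_equal. unfold u. lra. }
  assert (E2 : exp (-(s*η)) * exp (s*η) = 1).
  { rewrite <- exp_plus. replace (-(s*η) + s*η) with 0 by ring. apply exp_0. }
  assert (E3 : u < exp u). { pose proof (exp_ineq1 u ltac:(lra)). lra. }
  assert (E4 : u*u*u <= exp (s*η)). { rewrite E1. 
    assert (0 < u*u) by nra. apply Rmult_le_compat; nra. }
  assert (E5 : s^3*η^3 = 27 * (u*u*u)) by (unfold u; field).
  rewrite E5. pose proof (exp_pos (-(s*η))). nra.
Qed.

Lemma core (k1 k2 : R -> R) δ1 δ2 η :
  (forall z, continuous k1 z) -> (forall z, continuous k2 z) ->
  0 < η -> η <= δ1 -> η <= δ2 ->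
  (forall t, 0 <= t <= η -> k1 t = k2 t) ->
  forall eps, 0 < eps -> exists M, forall s, M < s ->
  Rabs (s^2 * RInt (fun t => exp (-(s*t)) * k1 t) 0 δ1
      - s^2 * RInt (fun t => exp (-(s*t)) * k2 t) 0 δ2) <= eps.
Proof.
  intros H1 H2 He Hd1 Hd2 Hk eps Heps.
  set (A1 := RInt (fun t => Rabs (k1 t)) η δ1).
  set (A2 := RInt (fun t => Rabs (k2 t)) η δ2).
  assert (P1 : 0 <= A1). { apply RInt_ge_0; auto. apply absint; auto. intros; apply Rabs_pos. }
  assert (P2 : 0 <= A2). { apply RInt_ge_0; auto. apply absint; auto. intros; apply Rabs_pos. }
  exists (1 + 27 * (A1 + A2) / (η^3 * eps)).
  intros s Hs.
  assert (Hs0 : 0 < s).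
  { assert (0 <= 27 * (A1 + A2) / (η^3 * eps)).
    { apply Rmult_le_pos. lra. left; apply Rinv_0_lt_compat. apply Rmult_lt_0_compat; auto. apply pow_lt; auto. }
    lra. }
  assert (C1 : forall (k : R -> R) δ, (forall z, continuous k z) -> η <= δ ->
     RInt (fun t => exp (-(s*t)) * k t) 0 δ =
     RInt (fun t => exp (-(s*t)) * k t) 0 η + RInt (fun t => exp (-(s*t)) * k t) η δ).
  { intros k δ Hk' Hd. symmetry. apply (RInt_Chasles (fun t => exp (-(s*t)) * k t)); apply hint; auto. }
  rewrite (C1 k1 δ1), (C1 k2 δ2); auto.
  assert (C2 : RInt (fun t => exp (-(s*t)) * k1 t) 0 η = RInt (fun t => exp (-(s*t)) * k2 t) 0 η).
  { apply RInt_ext. intros x Hx. rewrite Rmin_left, Rmax_right in Hx by lra. rewrite Hk; auto; lra. }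
  rewrite C2.
  pose proof (tail k1 s η δ1 H1 Hs0 Hd1) as T1.
  pose proof (tail k2 s η δ2 H2 Hs0 Hd2) as T2.
  fold A1 in T1. fold A2 in T2.
  set (I1 := RInt (fun t => exp (-(s*t)) * k1 t) η δ1) in *.
  set (I2 := RInt (fun t => exp (-(s*t)) * k2 t) η δ2) in *.
  set (I0 := RInt (fun t => exp (-(s*t)) * k2 t) 0 η).
  replace (s ^ 2 * (I0 + I1) - s ^ 2 * (I0 + I2)) with (s^2 * (I1 - I2)) by ring.
  rewrite Rabs_mult, Rabs_pos_eq by (apply pow_le; lra).
  set (E := exp (-(s*η))) in *.
  pose proof (expbound s η Hs0 He) as EB. fold E in EB.
  assert (HE : 0 < E) by apply exp_pos.
  assert (B : Rabs (I1 - I2) <= E * (A1 + A2)).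
  { eapply Rle_trans. apply Rabs_triang. rewrite Rabs_Ropp. lra. }
  assert (Hη3 : 0 < η^3) by (apply pow_lt; auto).
  assert (Hs2 : 27 * (A1 + A2) <= s * η^3 * eps).
  { assert (27 * (A1 + A2) / (η^3 * eps) < s) by lra.
    apply Rlt_le. 
    replace (27 * (A1 + A2)) with (27 * (A1 + A2) / (η^3 * eps) * (η^3 * eps)) by (field; lra).
    replace (s * η^3 * eps) with (s * (η^3 * eps)) by ring.
    apply Rmult_lt_compat_r; auto. apply Rmult_lt_0_compat; auto. }
  apply Rmult_le_reg_r with (s * η^3). apply Rmult_lt_0_compat; auto.
  apply Rle_trans with (s^2 * (E * (A1+A2)) * (s * η^3)).
  apply Rmult_le_compat_r. nra. apply Rmult_le_compat_l. nra. auto.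
  replace (s^2 * (E * (A1+A2)) * (s * η^3)) with ((s^3 * η^3 * E) * (A1 + A2)) by ring.
  nra.
Qed.

Lemma kcont_p (C : R -> R) y : (forall z, continuous C z) ->
  forall z, continuous (fun t => C (y + t) - C y) z.
Proof.
  intros HC z.
  apply (continuous_minus (fun t => C (y + t)) (fun _ => C y)).
  apply (continuous_comp (fun t => y + t) C). 
  apply (continuous_plus (fun _ => y) (fun t => t)). apply continuous_const. apply continuous_id.
  apply HC. apply continuous_const.
Qed.

Lemma kcont_m (C : R -> R) y : (forall z, continuous C z) ->
  forall z, continuous (fun t => C (y - t) - C y) z.
Proof.
  intros HC z.
  apply (continuous_minus (fun t => C (y - t)) (fun _ => C y)).
  apply (continuous_comp (fun t => y - t) C). 
  apply (continuous_minus (fun _ => y) (fun t => t)). apply continuous_const. apply continuous_id.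
  apply HC. apply continuous_const.
Qed.

Lemma tr_plus (G1 G2 C1 C2 : R -> R) y d1 d2 η r :
  (forall z, continuous C1 z) -> (forall z, continuous C2 z) ->
  0 < η -> η <= d1 - y -> η <= d2 - y ->
  (forall t, 0 <= t <= d1 - y -> G1 (y+t) = C1 (y+t)) ->
  (forall t, 0 <= t <= d2 - y -> G2 (y+t) = C2 (y+t)) ->
  (forall t, 0 <= t <= η -> C1 (y+t) - C1 y = C2 (y+t) - C2 y) ->
  Rbar_le (LDup_plus G2 d2 y) (Finite r) -> Rbar_le (LDup_plus G1 d1 y) (Finite r).
Proof.
  intros HC1 HC2 He Hd1 Hd2 E1 E2 Ag H.
  unfold LDup_plus in *. rewrite limsup_le_iff in *.
  intros eps Heps.
  destruct (H (eps/2) ltac:(lra)) as [M1 HM1].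
  destruct (core (fun t => C1 (y + t) - C1 y) (fun t => C2 (y + t) - C2 y) (d1 - y) (d2 - y) η
     (kcont_p C1 y HC1) (kcont_p C2 y HC2) He Hd1 Hd2 Ag (eps/2) ltac:(lra)) as [M2 HM2].
  exists (Rmax M1 M2). intros s Hs.
  assert (L : forall G C d, (forall t, 0 <= t <= d - y -> G (y+t) = C (y+t)) -> 0 <= d - y ->
    lap_plus G y (d - y) s = s^2 * RInt (fun t => exp (-(s*t)) * (C (y + t) - C y)) 0 (d - y)).
  { intros G C d EG Hd. unfold lap_plus. f_equal. apply RInt_ext.
    intros x Hx. rewrite Rmin_left, Rmax_right in Hx by lra.
    rewrite EG by lra. pose proof (EG 0 ltac:(lra)) as E0. rewrite Rplus_0_r in E0. rewrite E0. auto. }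
  rewrite (L G1 C1 d1); auto; try lra.
  specialize (HM1 s ltac:(pose proof (Rmax_l M1 M2); lra)).
  specialize (HM2 s ltac:(pose proof (Rmax_r M1 M2); lra)).
  rewrite (L G2 C2 d2) in HM1; auto; try lra.
  apply Rabs_le_between in HM2. lra.
Qed.

Lemma tr_minus (G1 G2 C1 C2 : R -> R) y c1 c2 η r :
  (forall z, continuous C1 z) -> (forall z, continuous C2 z) ->
  0 < η -> η <= y - c1 -> η <= y - c2 ->
  (forall t, 0 <= t <= y - c1 -> G1 (y-t) = C1 (y-t)) ->
  (forall t, 0 <= t <= y - c2 -> G2 (y-t) = C2 (y-t)) ->
  (forall t, 0 <= t <= η -> C1 (y-t) - C1 y = C2 (y-t) - C2 y) ->
  Rbar_le (LDup_minus G2 c2 y) (Finite r) -> Rbar_le (LDup_minus G1 c1 y) (Finite r).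
Proof.
  intros HC1 HC2 He Hd1 Hd2 E1 E2 Ag H.
  unfold LDup_minus in *. rewrite limsup_le_iff in *.
  intros eps Heps.
  destruct (H (eps/2) ltac:(lra)) as [M1 HM1].
  destruct (core (fun t => C1 (y - t) - C1 y) (fun t => C2 (y - t) - C2 y) (y - c1) (y - c2) η
     (kcont_m C1 y HC1) (kcont_m C2 y HC2) He Hd1 Hd2 Ag (eps/2) ltac:(lra)) as [M2 HM2].
  exists (Rmax M1 M2). intros s Hs.
  assert (L : forall G C c, (forall t, 0 <= t <= y - c -> G (y-t) = C (y-t)) -> 0 <= y - c ->
    lap_minus G y (y - c) s = - (s^2 * RInt (fun t => exp (-(s*t)) * (C (y - t) - C y)) 0 (y - c))).
  { intros G C c EG Hd. unfold lap_minus. rewrite Ropp_mult_distr_l. f_equal. apply RInt_ext.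
    intros x Hx. rewrite Rmin_left, Rmax_right in Hx by lra.
    rewrite EG by lra. pose proof (EG 0 ltac:(lra)) as E0. rewrite Rminus_0_r in E0. rewrite E0. auto. }
  rewrite (L G1 C1 c1); auto; try lra.
  specialize (HM1 s ltac:(pose proof (Rmax_l M1 M2); lra)).
  specialize (HM2 s ltac:(pose proof (Rmax_r M1 M2); lra)).
  rewrite (L G2 C2 c2) in HM1; auto; try lra.
  apply Rabs_le_between in HM2. lra.
Qed.

Definition clamp c d z := Rmax c (Rmin d z).

Lemma clamp_lip c d z w : Rabs (clamp c d z - clamp c d w) <= Rabs (z - w).
Proof.
  unfold clamp, Rmax, Rmin. repeat destruct Rle_dec; unfold Rabs; repeat destruct Rcase_abs; lra.
Qed.
Lemma clamp_in c d z : c <= d -> c <= clamp c d z <= d.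
Proof. unfold clamp, Rmax, Rmin. intros. repeat destruct Rle_dec; lra. Qed.
Lemma clamp_id c d z : c <= z <= d -> clamp c d z = z.
Proof. unfold clamp, Rmax, Rmin. intros. repeat destruct Rle_dec; lra. Qed.

Lemma cont_clamp G c d : c <= d -> continuous_on_cc G c d ->
  forall z, continuous (fun w => G (clamp c d w)) z.
Proof.
  intros Hcd HG z. unfold continuous. apply filterlim_locally. intros eps.
  pose proof (HG (clamp c d z) (clamp_in c d z Hcd)) as H.
  apply filterlim_locally with (eps := eps) in H.
  destruct H as [δ Hδ]. exists δ. intros w Hw.
  apply Hδ; [| apply clamp_in; auto].
  change (Rabs (clamp c d w - clamp c d z) < δ).
  change (Rabs (w - z) < δ) in Hw.
  eapply Rle_lt_trans. apply clamp_lip. auto.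
Qed.

Lemma cont_lip (C φ : R -> R) : (forall z, continuous C z) ->
  (forall z w, Rabs (φ z - φ w) <= Rabs (z - w)) -> forall z, continuous (fun w => C (φ w)) z.
Proof.
  intros HC Hφ z. apply (continuous_comp φ C); auto.
  unfold continuous. apply filterlim_locally. intros eps. exists eps. intros w Hw.
  change (Rabs (φ w - φ z) < eps). change (Rabs (w - z) < eps) in Hw.
  eapply Rle_lt_trans. apply Hφ. auto.
Qed.

Lemma cont_cc_of (W : R -> R) a b : (forall z, continuous W z) -> continuous_on_cc W a b.
Proof. intros H x _. apply (filterlim_filter_le_1 _ (filter_le_within _)). apply H. Qed.

Lemma fin_not_pinf X r : Rbar_le X (Finite r) -> X <> p_infty.
Proof. destruct X; simpl; intros; try discriminate; contradiction. Qed.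

Lemma restrict f V a b x : a < x < b -> minor_fun f V a b -> minor_fun f V a x.
Proof.
  intros Hx [HV Hd]. split.
  - intros y Hy. intros P HP. pose proof (HV y ltac:(lra) P HP) as H.
    unfold filtermap, within in *. eapply filter_imp; [| exact H]. simpl. intros z Hz Dz. apply Hz. lra.
  - set (C := fun w => V (clamp a b w)).
    assert (HC : forall z, continuous C z) by (apply cont_clamp; auto; lra).
    assert (EC : forall z, a <= z <= b -> V z = C z).
    { intros z Hz. unfold C. rewrite clamp_id; auto. }
    intros y Hy. destruct (Hd y ltac:(lra)) as [Hle _].
    assert (G : Rbar_le (LDup V a x y) (Finite (f y))).
    2:{ split; auto. eapply fin_not_pinf; eauto. }
    unfold LDup in *.
    destruct (Req_EM_T y a) as [Ea|Na].
    + subst y. eapply (tr_plus V V C C a x b (x - a)); auto; try lra.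
      intros; apply EC; lra. intros; apply EC; lra.
    + destruct (Req_EM_T y b) as [Eb|Nb]; [lra|].
      destruct (Req_EM_T y x) as [Ex|Nx].
      * subst y. apply max_le in Hle. tauto.
      * apply max_le in Hle. apply max_le. split; [|tauto].
        eapply (tr_plus V V C C y x b (x - y)); auto; try lra; try tauto.
        intros; apply EC; lra. intros; apply EC; lra.
Qed.

Definition gl V1 V a b x z :=
  V1 (clamp a x z) + V (clamp a b (Rmax x z)) - V (clamp a b x).

Lemma glue f V1 V a b x : a < x < b -> minor_fun f V1 a x -> minor_fun f V a b ->
  minor_fun f (gl V1 V a b x) a b.
Proof.
  intros Hx [HV1 Hd1] [HV Hd].
  set (C1 := fun w => V1 (clamp a x w)).
  set (C2 := fun w => V (clamp a b w)).
  assert (HC1 : forall z, continuous C1 z) by (apply cont_clamp; auto; lra).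
  assert (HC2 : forall z, continuous C2 z) by (apply cont_clamp; auto; lra).
  assert (EC1 : forall z, a <= z <= x -> V1 z = C1 z).
  { intros z Hz. unfold C1. rewrite clamp_id; auto. }
  assert (EC2 : forall z, a <= z <= b -> V z = C2 z).
  { intros z Hz. unfold C2. rewrite clamp_id; auto. }
  set (W := gl V1 V a b x).
  assert (HW : forall z, continuous W z).
  { intros z. unfold W, gl.
    apply (continuous_minus (fun z => V1 (clamp a x z) + V (clamp a b (Rmax x z))) (fun _ => V (clamp a b x))).
    apply (continuous_plus (fun z => V1 (clamp a x z)) (fun z => V (clamp a b (Rmax x z)))).
    apply HC1. apply (cont_lip C2 (Rmax x)); auto.
    intros u w. unfold Rmax. repeat destruct Rle_dec; unfold Rabs; repeat destruct Rcase_abs; lra.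
    apply continuous_const. }
  assert (FW1 : forall z, z <= x -> W z = C1 z).
  { intros z Hz. unfold W, gl, C1. rewrite Rmax_left by lra. ring. }
  assert (FW2 : forall z, x <= z -> W z = V1 x + C2 z - C2 x).
  { intros z Hz. unfold W, gl, C2. rewrite Rmax_right by lra.
    replace (clamp a x z) with x; [ring|]. unfold clamp. rewrite Rmin_left by lra. rewrite Rmax_right by lra. auto. }
  split. apply cont_cc_of; auto.
  intros y Hy.
  assert (G : Rbar_le (LDup W a b y) (Finite (f y))).
  2:{ split; auto. eapply fin_not_pinf; eauto. }
  unfold LDup.
  destruct (Rlt_le_dec y x) as [Ylt|Yge].
  - destruct (Hd1 y ltac:(lra)) as [Hle _]. unfold LDup in Hle.
    destruct (Req_EM_T y a) as [Ea|Na].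
    + subst y. eapply (tr_plus W V1 W C1 a b x (x - a)); auto; try lra.
      intros; apply EC1; lra.
      intros t Ht. rewrite !FW1; lra.
    + destruct (Req_EM_T y b) as [Eb|Nb]; [lra|].
      destruct (Req_EM_T y x) as [Ex|Nx]; [lra|].
      apply max_le in Hle. apply max_le. split.
      * eapply (tr_plus W V1 W C1 y b x (x - y)); auto; try lra; try tauto.
        intros; apply EC1; lra.
        intros t Ht. rewrite !FW1; lra.
      * eapply (tr_minus W V1 W C1 y a a (y - a)); auto; try lra; try tauto.
        intros; apply EC1; lra.
        intros t Ht. rewrite !FW1; lra.
  - destruct (Req_EM_T y a) as [Ea|Na]; [lra|].
    destruct (Hd y ltac:(lra)) as [Hle _]. unfold LDup in Hle.
    destruct (Req_EM_T y a) as [Ea|_]; [lra|].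
    destruct (Req_EM_T y b) as [Eb|Nb].
    + subst y. eapply (tr_minus W V W C2 b a a (b - x)); auto; try lra.
      intros; apply EC2; lra.
      intros t Ht. rewrite !FW2; lra.
    + apply max_le in Hle. apply max_le. split.
      * eapply (tr_plus W V W C2 y b b (b - y)); auto; try lra; try tauto.
        intros; apply EC2; lra.
        intros t Ht. rewrite !FW2; lra.
      * destruct (Req_EM_T y x) as [Ex|Nx].
        -- subst y. destruct (Hd1 x ltac:(lra)) as [Hle1 _]. unfold LDup in Hle1.
           destruct (Req_EM_T x a); [lra|]. destruct (Req_EM_T x x); [|congruence].
           eapply (tr_minus W V1 W C1 x a a (x - a)); auto; try lra.
           intros; apply EC1; lra.
           intros t Ht. rewrite !FW1; lra.
        -- eapply (tr_minus W V W C2 y a a (y - x)); auto; try lra; try tauto.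
           intros; apply EC2; lra.
           intros t Ht. rewrite !FW2; lra.
Qed.

Lemma bounds f a b I V x : a < b -> minor_sup f a b = Finite I -> minor_fun f V a b ->
  a <= x <= b ->
  V x - V a <= Laplace_int f a x <= V x - V a + (I - (V b - V a)).
Proof.
  intros Hab HI HV Hx.
  assert (Vb : V b - V a <= I).
  { assert (Rbar_le (Finite (V b - V a)) (minor_sup f a b)).
    { apply (proj1 (lub_ok _)). exists V; auto. }
    rewrite HI in H. exact H. }
  unfold Laplace_int.
  destruct (Rle_dec x a) as [Hxa|Hxa].
  { replace x with a by lra. lra. }
  destruct (Req_dec x b) as [Exb|Nxb].
  { subst x. rewrite HI. simpl. lra. }
  assert (Lo : Rbar_le (Finite (V x - V a)) (minor_sup f a x)).
  { apply (proj1 (lub_ok _)). exists V. split; auto. apply restrict with b; auto; lra. }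
  assert (Up : Rbar_le (minor_sup f a x) (Finite (I - (V b - V x)))).
  { apply (proj2 (lub_ok _)). intros z [V1 [HV1 ->]].
    pose proof (glue f V1 V a b x ltac:(lra) HV1 HV) as HW.
    assert (Rbar_le (Finite (gl V1 V a b x b - gl V1 V a b x a)) (minor_sup f a b)).
    { apply (proj1 (lub_ok _)). exists (gl V1 V a b x); auto. }
    rewrite HI in H. simpl in H |- *.
    unfold gl in H.
    assert (K : clamp a x b = x).
    { unfold clamp. rewrite Rmin_left by lra. rewrite Rmax_right by lra. auto. }
    rewrite K, (Rmax_right x b), (Rmax_left x a), !(clamp_id a b), (clamp_id a x a) in H; lra. }
  destruct (minor_sup f a x) as [s| |]; simpl in *; try contradiction. lra.
Qed.

Theorem theorem5p2 (f : R -> R) (a b : R) :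
  Laplace_integrable f a b ->
  continuous_on_cc (fun x => Laplace_int f a x) a b.
Proof.
  intros [Hab [I [Hsup _]]] x0 Hx0.
  apply filterlim_locally. intros eps.
  assert (e3 : 0 < eps / 3) by (destruct eps; simpl; lra).
  assert (exists V, minor_fun f V a b /\ I - (V b - V a) < eps / 3) as [V [HV Hgap]].
  { apply NNPP. intro Hn.
    assert (Rbar_le (minor_sup f a b) (Finite (I - eps/3))).
    { apply (proj2 (lub_ok _)). intros z [V [HV ->]]. simpl.
      apply Rnot_lt_le. intro Hl. apply Hn. exists V. split; auto. lra. }
    rewrite Hsup in H. simpl in H. lra. }
  pose proof (proj1 HV x0 Hx0) as Hc.
  apply filterlim_locally with (eps := mkposreal _ e3) in Hc.
  unfold filtermap, within in *.
  eapply filter_imp; [| exact Hc]. simpl. intros z Hz Dz.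
  specialize (Hz Dz).
  change (Rabs (V z - V x0) < eps/3) in Hz.
  change (Rabs (Laplace_int f a z - Laplace_int f a x0) < eps).
  pose proof (bounds f a b I V z Hab Hsup HV Dz).
  pose proof (bounds f a b I V x0 Hab Hsup HV Hx0).
  apply Rabs_lt_between. apply Rabs_lt_between in Hz. lra.
Qed.
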